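(* In the setting below, let $g_P,g_P^l,g_P^u$ be as defined there with prediction windows $D_n$, and let $g_0,g_0^l,g_0^u$ denote the same functions with every $D_n$ replaced by $0$. Let $\phi_P^*=\min_{\lambda\ge0}g_P(\lambda)$, $\phi_0^*=\min_{\lambda\ge0}g_0(\lambda)$, let $\lambda_0^*$ be a minimizer of $g_0^l$ and $\lambda_P^*$ a minimizer of $g_P^l$ over $\lambda\ge0$. Then $$g_P^l(\lambda_P^* )-g_0^u(\lambda_P^* )\le\phi_P^*-\phi_0^*\le g_P^u(\lambda_0^* )-g_0^l(\lambda_0^* ).$$
   Context: $N$ users; $B>0$. User $n$ has arrival rate $a_n\ge0$, a probability vector $\boldsymbol\eta_n$ on its channel states, $\beta_n\ge0$, integers $\tau_n\ge1$, $D_n\ge0$, a Markov channel on $\{1,\dots,K_n\}$ with transition matrix $(P_n^{i,j})$, a finite set $\mathcal E\subset[0,\infty)$ containing $0$ and a positive element, and $\zeta_n(i,\cdot):\mathcal E\to[0,1]$ with $\zeta_n(i,0)=0$, $\zeta_n(i,e)>0$ for $e>0$, strictly increasing; states are totally ordered by $\zeta_n$ (for all $i,j$ either $\zeta_n(i,e)\ge\zeta_n(j,e)\ \forall e$ or $\le\ \forall e$), with $i_n^{\max}$, $i_n^{\min}$ states of maximal and minimal $\zeta_n(\cdot,e)$ for all $e$. For $\lambda\ge0$: $V_n(0,0,i)=0$, $V_n(0,\tau,i)=\max_{e\in\mathcal E}\{-\lambda e+\zeta_n(i,e)\beta_n+(1-\zeta_n(i,e))\sum_jP_n^{i,j}V_n(0,\tau-1,j)\}$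 for $1\le\tau\le\tau_n+D_n$; $V_n^l(0)=0$, $V_n^l(\tau)=\max_{e\in\mathcal E,e>0}\frac{1-[1-\zeta_n(i_n^{\min},e)]^{\tau}}{\zeta_n(i_n^{\min},e)}[-\lambda e+\zeta_n(i_n^{\min},e)\beta_n]$; $V_n^u(0)=0$, $V_n^u(\tau)=\sum_{z=1}^{\tau}\max_{e\in\mathcal E}\{-\lambda e+\zeta_n(i_n^{\max},e)(\beta_n-\max\{0,V_n^l(z-1)\})\}$ (all depending on $\lambda$). Then $g_P(\lambda)=\lambda B+\sum_n a_n\sum_i\eta_n^iV_n(0,\tau_n+D_n,i)$, $g_P^u(\lambda)=\lambda B+\sum_n a_n\min\{\beta_n,V_n^u(\tau_n+D_n)\}$, $g_P^l(\lambda)=\lambda B+\sum_n a_n\max\{0,V_n^l(\tau_n+D_n)\}$. $g_P$ ($g_0$) is the Lagrange dual function with perfect prediction (no prediction), and $\phi_P^*$ ($\phi_0^*$) the optimal weighted timely-throughput. *)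

(* Defs.v *)
From Stdlib Require Import Reals List.
Import ListNotations.
Open Scope R_scope.

Fixpoint sumR (n : nat) (f : nat -> R) : R :=
  match n with
  | O => 0
  | S m => sumR m f + f m
  end.

(* maximum of f over a (finite, nonempty) list; 0 on the empty list (never used) *)
Definition maxl (f : R -> R) (l : list R) : R :=
  match l with
  | nil => 0
  | e :: l' => fold_right (fun x acc => Rmax (f x) acc) (f e) l'
  end.

(* The data of the system. Users are indexed by n < N, channel states of
   user n by i < K n (states 0..K n - 1, i.e. {1..K_n} shifted). *)
Record System := {
  N : nat;
  B : R;
  a : nat -> R;
  eta : nat -> nat -> R;
  beta : nat -> R;
  tau : nat -> nat;
  K : nat -> nat;
  P : nat -> nat -> nat -> R;
  E : list R;
  zeta : nat -> nat -> R -> R;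
  imax : nat -> nat;
  imin : nat -> nat
}.

Definition wf (S : System) : Prop :=
  0 < B S /\
  (forall e, In e (E S) -> 0 <= e) /\ In 0 (E S) /\ (exists e, In e (E S) /\ 0 < e) /\
  forall n, (n < N S)%nat ->
    0 <= a S n /\ 0 <= beta S n /\ (1 <= tau S n)%nat /\ (1 <= K S n)%nat /\
    (forall i, (i < K S n)%nat -> 0 <= eta S n i) /\
    sumR (K S n) (eta S n) = 1 /\
    (forall i j, (i < K S n)%nat -> (j < K S n)%nat -> 0 <= P S n i j) /\
    (forall i, (i < K S n)%nat -> sumR (K S n) (P S n i) = 1) /\
    (forall i, (i < K S n)%nat ->
       zeta S n i 0 = 0 /\
       (forall e, In e (E S) -> 0 <= zeta S n i e <= 1) /\
       (forall e, In e (E S) -> 0 < e -> 0 < zeta S n i e) /\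
       (forall e1 e2, In e1 (E S) -> In e2 (E S) -> e1 < e2 ->
          zeta S n i e1 < zeta S n i e2)) /\
    (forall i j, (i < K S n)%nat -> (j < K S n)%nat ->
       (forall e, In e (E S) -> zeta S n i e >= zeta S n j e) \/
       (forall e, In e (E S) -> zeta S n i e <= zeta S n j e)) /\
    (imax S n < K S n)%nat /\ (imin S n < K S n)%nat /\
    (forall i e, (i < K S n)%nat -> In e (E S) ->
       zeta S n (imin S n) e <= zeta S n i e /\ zeta S n i e <= zeta S n (imax S n) e).

Fixpoint V (S : System) (n : nat) (lam : R) (t : nat) (i : nat) : R :=
  match t with
  | O => 0
  | Datatypes.S t' =>
      maxl (fun e => - lam * e + zeta S n i e * beta S n
                     + (1 - zeta S n i e) *
                         sumR (K S n) (fun j => P S n i j * V S n lam t' j))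
           (E S)
  end.

Definition Vl (S : System) (n : nat) (lam : R) (t : nat) : R :=
  match t with
  | O => 0
  | _ => maxl (fun e => let z := zeta S n (imin S n) e in
                        (1 - (1 - z) ^ t) / z * (- lam * e + z * beta S n))
              (filter (fun e => if Rlt_dec 0 e then true else false) (E S))
  end.

Definition Vu (S : System) (n : nat) (lam : R) (t : nat) : R :=
  sumR t (fun z0 => (* z = z0 + 1, so z - 1 = z0 *)
    maxl (fun e => - lam * e + zeta S n (imax S n) e *
                     (beta S n - Rmax 0 (Vl S n lam z0))) (E S)).

Definition g (S : System) (D : nat -> nat) (lam : R) : R :=
  lam * B S + sumR (N S) (fun n => a S n *
     sumR (K S n) (fun i => eta S n i * V S n lam (tau S n + D n) i)).

Definition gu (S : System) (D : nat -> nat) (lam : R) : R :=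
  lam * B S + sumR (N S) (fun n => a S n * Rmin (beta S n) (Vu S n lam (tau S n + D n))).

Definition gl (S : System) (D : nat -> nat) (lam : R) : R :=
  lam * B S + sumR (N S) (fun n => a S n * Rmax 0 (Vl S n lam (tau S n + D n))).

Definition D0 : nat -> nat := fun _ => O.

Definition is_min_value (f : R -> R) (phi : R) : Prop :=
  (exists l, 0 <= l /\ f l = phi) /\ (forall l, 0 <= l -> phi <= f l).

Definition is_minimizer (f : R -> R) (l0 : R) : Prop :=
  0 <= l0 /\ forall l, 0 <= l -> f l0 <= f l.

(* Main.v *)
Require Import Defs.
From Stdlib Require Import Reals List Lra Psatz.
Open Scope R_scope.

Lemma fold_ge (f : R -> R) b l : b <= fold_right (fun x acc => Rmax (f x) acc) b l /\
  forall y, In y l -> f y <= fold_right (fun x acc => Rmax (f x) acc) b l.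
Proof.
  induction l as [|y l [IH1 IH2]]; simpl; split; try lra; try (intros _ []).
  - eapply Rle_trans; [exact IH1|apply Rmax_r].
  - intros x [<-|Hx]; [apply Rmax_l|]. eapply Rle_trans; [apply IH2; auto|apply Rmax_r].
Qed.

Lemma maxl_ge (f : R -> R) l x : In x l -> f x <= maxl f l.
Proof.
  destruct l as [|e l']; [intros []|]. simpl.
  destruct (fold_ge f (f e) l') as [H1 H2].
  intros [<-|Hx]; auto.
Qed.

Lemma fold_le (f : R -> R) b l c : b <= c -> (forall y, In y l -> f y <= c) ->
  fold_right (fun x acc => Rmax (f x) acc) b l <= c.
Proof.
  intros Hb. induction l as [|y l IH]; simpl; intros H; auto.
  apply Rmax_lub; auto.
Qed.

Lemma maxl_le (f : R -> R) l c : (forall x, In x l -> f x <= c) -> 0 <= c -> maxl f l <= c.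
Proof.
  intros H H0. destruct l as [|e l']; simpl; [lra|].
  apply fold_le; auto. apply H; simpl; auto. intros; apply H; simpl; auto.
Qed.

Lemma maxl_le' (f : R -> R) l c : l <> nil -> (forall x, In x l -> f x <= c) -> maxl f l <= c.
Proof.
  intros Hn H. destruct l as [|e l']; simpl; [congruence|].
  apply fold_le; auto. apply H; simpl; auto. intros; apply H; simpl; auto.
Qed.

Lemma sumR_le n f g : (forall i, (i < n)%nat -> f i <= g i) -> sumR n f <= sumR n g.
Proof.
  induction n; simpl; intros H; [lra|].
  apply Rplus_le_compat; [apply IHn; intros; apply H; lia|apply H; lia].
Qed.

Lemma sumR_scal n c f : sumR n (fun i => c * f i) = c * sumR n f.
Proof. induction n; simpl; [ring|rewrite IHn; ring]. Qed.

Lemma convex_le n w f c : (forall i, (i < n)%nat -> 0 <= w i) -> sumR n w = 1 ->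
  (forall i, (i < n)%nat -> f i <= c) -> sumR n (fun i => w i * f i) <= c.
Proof.
  intros Hw Hs Hf. apply Rle_trans with (sumR n (fun i => c * w i)).
  - apply sumR_le. intros i Hi. rewrite (Rmult_comm c). apply Rmult_le_compat_l; auto.
  - rewrite sumR_scal, Hs. lra.
Qed.

Lemma convex_ge n w f c : (forall i, (i < n)%nat -> 0 <= w i) -> sumR n w = 1 ->
  (forall i, (i < n)%nat -> c <= f i) -> c <= sumR n (fun i => w i * f i).
Proof.
  intros Hw Hs Hf. apply Rle_trans with (sumR n (fun i => c * w i)).
  - rewrite sumR_scal, Hs. lra.
  - apply sumR_le. intros i Hi. rewrite (Rmult_comm c). apply Rmult_le_compat_l; auto.
Qed.

Lemma pow_le1 x k : 0 <= x <= 1 -> 0 <= x ^ k <= 1.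
Proof.
  intros H. induction k; simpl; [lra|]. split; [apply Rmult_le_pos; lra|].
  rewrite <- (Rmult_1_r 1). apply Rmult_le_compat; lra.
Qed.

Ltac wfn HW Hn :=
  let H := fresh in
  destruct HW as (HB & HE0 & HE1 & HE2 & H);
  destruct (H _ Hn) as (Ha & Hb & Ht & HK & Heta & Hseta & HP & HsP & Hz & Hord & Himax & Himin & Hmm);
  clear H.

Section X. End X.

Lemma V_nonneg sy n lam : wf sy -> (n < Defs.N sy)%nat ->
  forall t i, (i < K sy n)%nat -> 0 <= V sy n lam t i.
Proof.
  intros HW Hn. wfn HW Hn. induction t; intros i Hi; simpl; [lra|].
  eapply Rle_trans; [|apply (maxl_ge _ _ 0 HE1)]. simpl.
  destruct (Hz i Hi) as (Hz0 & _). rewrite Hz0.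
  assert (0 <= sumR (K sy n) (fun j => P sy n i j * V sy n lam t j)).
  { apply convex_ge with (c := 0); auto. }
  lra.
Qed.

Lemma V_le_beta sy n lam : wf sy -> (n < Defs.N sy)%nat -> 0 <= lam ->
  forall t i, (i < K sy n)%nat -> V sy n lam t i <= beta sy n.
Proof.
  intros HW Hn Hl. wfn HW Hn. induction t; intros i Hi; simpl; [lra|].
  apply maxl_le; [|lra]. intros e He.
  destruct (Hz i Hi) as (_ & Hz1 & _). specialize (Hz1 e He). specialize (HE0 e He).
  assert (Hs : sumR (K sy n) (fun j => P sy n i j * V sy n lam t j) <= beta sy n).
  { apply convex_le; auto. }
  assert (0 <= lam * e) by (apply Rmult_le_pos; lra).
  assert ((1 - zeta sy n i e) * sumR (K sy n) (fun j => P sy n i j * V sy n lam t j)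
          <= (1 - zeta sy n i e) * beta sy n) by (apply Rmult_le_compat_l; lra).
  nra.
Qed.

Definition hfun sy n lam e t :=
  let z := zeta sy n (imin sy n) e in (1 - (1 - z) ^ t) / z * (- lam * e + z * beta sy n).

Lemma V_ge_h sy n lam e : wf sy -> (n < Defs.N sy)%nat -> 0 <= lam -> In e (E sy) -> 0 < e ->
  forall t i, (i < K sy n)%nat -> hfun sy n lam e t <= V sy n lam t i.
Proof.
  intros HW Hn Hl He Hep. wfn HW Hn.
  set (z := zeta sy n (imin sy n) e).
  destruct (Hz _ Himin) as (_ & Hzm1 & Hzm2 & _).
  assert (Hz01 : 0 < z <= 1) by (specialize (Hzm1 e He); specialize (Hzm2 e He Hep); unfold z; lra).
  assert (Hle : 0 <= lam * e) by (apply Rmult_le_pos; lra).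
  assert (Hhb : forall t, hfun sy n lam e t <= beta sy n).
  { intro t. unfold hfun; fold z. destruct (pow_le1 (1 - z) t) as [Hq0 Hq1]; [lra|].
    set (q := (1 - z) ^ t) in *.
    assert (Hw : 0 <= (1 - q) / z) by (apply Rmult_le_pos; [lra|left; apply Rinv_0_lt_compat; lra]).
    replace ((1 - q) / z * (- lam * e + z * beta sy n)) with
      (- ((1 - q) / z * (lam * e)) + (1 - q) * beta sy n) by (field; lra).
    assert (0 <= (1 - q) / z * (lam * e)) by (apply Rmult_le_pos; lra).
    assert (0 <= q * beta sy n) by (apply Rmult_le_pos; lra). nra. }
  assert (Hrec : forall t, hfun sy n lam e (Datatypes.S t) =
     - lam * e + z * beta sy n + (1 - z) * hfun sy n lam e t).
  { intro t. unfold hfun; fold z. simpl. field. lra. }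
  induction t; intros i Hi.
  - unfold hfun. simpl. replace (1 - 1) with 0 by ring. unfold Rdiv. rewrite !Rmult_0_l. lra.
  - rewrite Hrec. simpl. eapply Rle_trans; [|apply (maxl_ge _ _ e He)]. simpl.
    set (s := sumR (K sy n) (fun j => P sy n i j * V sy n lam t j)).
    assert (Hs : hfun sy n lam e t <= s) by (apply convex_ge; auto).
    destruct (Hz i Hi) as (_ & Hzi1 & _). specialize (Hzi1 e He).
    destruct (Hmm i e Hi He) as [Hzi _]. fold z in Hzi.
    set (zi := zeta sy n i e) in *. set (h := hfun sy n lam e t) in *.
    specialize (Hhb t). fold h in Hhb.
    assert ((1 - zi) * h <= (1 - zi) * s) by (apply Rmult_le_compat_l; lra).
    assert (0 <= (zi - z) * (beta sy n - h)) by (apply Rmult_le_pos; lra).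
    nra.
Qed.

Lemma V_ge_Vl sy n lam : wf sy -> (n < Defs.N sy)%nat -> 0 <= lam ->
  forall t i, (i < K sy n)%nat -> Vl sy n lam t <= V sy n lam t i.
Proof.
  intros HW Hn Hl t i Hi. destruct t as [|t]; simpl Vl.
  - simpl. lra.
  - apply maxl_le; [|apply (V_nonneg _ _ _ HW Hn); auto].
    intros x Hx. apply filter_In in Hx. destruct Hx as [Hx Hp].
    destruct (Rlt_dec 0 x) as [Hx0|]; [|discriminate].
    apply (V_ge_h sy n lam x HW Hn Hl Hx Hx0 (Datatypes.S t) i Hi).
Qed.

Lemma V_le_Vu sy n lam : wf sy -> (n < Defs.N sy)%nat -> 0 <= lam ->
  forall t i, (i < K sy n)%nat -> V sy n lam t i <= Vu sy n lam t.
Proof.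
  intros HW Hn Hl.
  pose proof (V_nonneg _ _ lam HW Hn) as Hnn.
  pose proof (V_ge_Vl _ _ _ HW Hn Hl) as HVl.
  pose proof (V_le_beta _ _ _ HW Hn Hl) as Hbeta.
  wfn HW Hn.
  induction t; intros i Hi.
  - simpl. unfold Vu. simpl. lra.
  - change (Vu sy n lam (Datatypes.S t)) with (Vu sy n lam t +
      maxl (fun e => - lam * e + zeta sy n (imax sy n) e *
                     (beta sy n - Rmax 0 (Vl sy n lam t))) (E sy)).
    simpl. apply maxl_le'. { intro Hc. rewrite Hc in HE1. contradiction. }
    intros e He.
    set (s := sumR (K sy n) (fun j => P sy n i j * V sy n lam t j)).
    assert (Hs1 : s <= Vu sy n lam t) by (apply convex_le; auto).
    assert (Hs2 : s <= beta sy n) by (apply convex_le; auto).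
    assert (Hs3 : Rmax 0 (Vl sy n lam t) <= s).
    { apply Rmax_lub; apply convex_ge; auto. }
    pose proof (maxl_ge (fun e => - lam * e + zeta sy n (imax sy n) e *
                     (beta sy n - Rmax 0 (Vl sy n lam t))) (E sy) e He) as Hm. simpl in Hm.
    destruct (Hz i Hi) as (_ & Hzi1 & _). specialize (Hzi1 e He).
    destruct (Hmm i e Hi He) as [_ Hzi].
    set (zi := zeta sy n i e) in *. set (zm := zeta sy n (imax sy n) e) in *.
    set (m := Rmax 0 (Vl sy n lam t)) in *.
    assert (zi * (beta sy n - s) <= zm * (beta sy n - s)) by (apply Rmult_le_compat_r; lra).
    assert (zm * (beta sy n - s) <= zm * (beta sy n - m)) by (apply Rmult_le_compat_l; lra).
    nra.
Qed.

Lemma g_bounds sy D lam : wf sy -> 0 <= lam ->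
  gl sy D lam <= g sy D lam <= gu sy D lam.
Proof.
  intros HW Hl. unfold gl, g, gu. split; apply Rplus_le_compat_l; apply sumR_le; intros n Hn;
  pose proof (V_nonneg _ _ lam HW Hn) as Hnn;
  pose proof (V_ge_Vl _ _ _ HW Hn Hl) as HVl;
  pose proof (V_le_beta _ _ _ HW Hn Hl) as Hbeta;
  pose proof (V_le_Vu _ _ _ HW Hn Hl) as HVu;
  wfn HW Hn; apply Rmult_le_compat_l; auto.
  - apply Rmax_lub; apply convex_ge; auto.
  - apply Rmin_glb; apply convex_le; auto.
Qed.

Theorem theorem8 (S : System) (D : nat -> nat)
  (phiP phi0 lamP lam0 : R) :
  wf S ->
  is_min_value (g S D) phiP ->
  is_min_value (g S D0) phi0 ->
  is_minimizer (gl S D0) lam0 ->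
  is_minimizer (gl S D) lamP ->
  gl S D lamP - gu S D0 lamP <= phiP - phi0 <= gu S D lam0 - gl S D0 lam0.
Proof.
  intros HW [[lP [HlP HgP]] HP] [[l0 [Hl0 Hg0]] H0] [Hlam0 Hm0] [HlamP HmP].
  pose proof (g_bounds S D lam0 HW Hlam0).
  pose proof (g_bounds S D0 lamP HW HlamP).
  pose proof (g_bounds S D lP HW HlP).
  pose proof (g_bounds S D0 l0 HW Hl0).
  pose proof (HP lam0 Hlam0). pose proof (H0 lamP HlamP).
  pose proof (Hm0 l0 Hl0). pose proof (HmP lP HlP).
  split; lra.
Qed.
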